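(* Let $H$ be a complex infinite-dimensional separable Hilbert space and let $(f_n)_{n=1}^\infty$ be a frame for $H$ with optimal upper frame bound $1$ and analysis operator $U$, such that $e=e((f_n)_{n=1}^\infty)<\infty$ and $\dim\operatorname{Im}(I-U^*U)<\infty$. Let $(x_n)_{n=1}^k$ be any finite sequence in $H$ such that $x_1,\dots,x_k,f_1,f_2,\dots$ is a Parseval frame for $H$. Then $$\sum_{n=1}^k\|x_n\|^2=\sum_{n=1}^\infty(1-\|f_n\|^2)-e.$$
   Context: The analysis operator is $U:H\to\ell^2$, $Ux=(\langle x,f_n\rangle)_n$. The optimal upper frame bound is the infimum of all $B$ with $\sum_n|\langle x,f_n\rangle|^2\le B\|x\|^2$ for all $x$. The excess $e((f_n))$ of a frame is the maximal number of elements that can be deleted so that the remaining sequence is still a frame for $H$. A Parseval frame is a sequence $(h_n)$ with $\sum_n|\langle x,h_n\rangle|^2=\|x\|^2$ for all $x$. *)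

(* Defs.v *)
(* The Hilbert space H is modelled concretely as
   the complex sequence space l^2(N) (every complex infinite-dimensional
   separable Hilbert space is unitarily isomorphic to it).  A complex number is
   a pair (re, im) of reals. *)
From Stdlib Require Import Reals Lra List Classical ClassicalEpsilon.
Open Scope R_scope.

(* total value of a real series (0 if it does not converge) *)
Definition series_val (u : nat -> R) : R :=
  match excluded_middle_informative (exists l, infinite_sum u l) with
  | left H => proj1_sig (constructive_indefinite_description _ H)
  | right _ => 0
  end.

Fixpoint fsum (m : nat) (g : nat -> R) : R :=
  match m with O => 0 | S m' => fsum m' g + g m' end.

Definition vec := nat -> (R * R).

Definition cabs2 (z : R * R) : R := fst z ^ 2 + snd z ^ 2.

Definition l2 (x : vec) : Prop := exists l, infinite_sum (fun i => cabs2 (x i)) l.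

Definition nrm2 (x : vec) : R := series_val (fun i => cabs2 (x i)).

Definition ipr (x y : vec) : R :=
  series_val (fun i => fst (x i) * fst (y i) + snd (x i) * snd (y i)).
Definition ipi (x y : vec) : R :=
  series_val (fun i => snd (x i) * fst (y i) - fst (x i) * snd (y i)).
Definition ip (x y : vec) : R * R := (ipr x y, ipi x y).

(* subfamily (f_n)_{n | P n}: terms with P n = false are zeroed out *)
Definition coef2 (P : nat -> bool) (f : nat -> vec) (x : vec) (n : nat) : R :=
  if P n then cabs2 (ip x (f n)) else 0.

Definition frame_sub (P : nat -> bool) (f : nat -> vec) : Prop :=
  (forall n, l2 (f n)) /\
  exists A B, 0 < A /\
    forall x, l2 x -> exists s, infinite_sum (coef2 P f x) s /\
      A * nrm2 x <= s /\ s <= B * nrm2 x.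

Definition is_frame (f : nat -> vec) : Prop := frame_sub (fun _ => true) f.

Definition upper_frame_bound (f : nat -> vec) (B : R) : Prop :=
  forall x, l2 x -> exists s, infinite_sum (coef2 (fun _ => true) f x) s /\
    s <= B * nrm2 x.

Definition optimal_upper_bound (f : nat -> vec) (B : R) : Prop :=
  (forall B', upper_frame_bound f B' -> B <= B') /\
  (forall m, (forall B', upper_frame_bound f B' -> m <= B') -> m <= B).

Definition inlist (l : list nat) (n : nat) : bool := existsb (Nat.eqb n) l.

Definition excess (f : nat -> vec) (e : nat) : Prop :=
  (exists S : list nat, NoDup S /\ length S = e /\
     frame_sub (fun n => negb (inlist S n)) f) /\
  (forall D : nat -> bool, frame_sub (fun n => negb (D n)) f ->
     exists l : list nat, NoDup l /\ (length l <= e)%nat /\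
       forall n, D n = true -> In n l).

(* U^*U x = sum_n <x,f_n> f_n, computed coordinatewise *)
Definition frame_op (f : nat -> vec) (x : vec) : vec := fun i =>
  (series_val (fun n => ipr x (f n) * fst (f n i) - ipi x (f n) * snd (f n i)),
   series_val (fun n => ipr x (f n) * snd (f n i) + ipi x (f n) * fst (f n i))).

Definition lincomb (m : nat) (c : nat -> R * R) (v : nat -> vec) (i : nat) : R * R :=
  (fsum m (fun j => fst (c j) * fst (v j i) - snd (c j) * snd (v j i)),
   fsum m (fun j => fst (c j) * snd (v j i) + snd (c j) * fst (v j i))).

(* dim Im (I - U^*U) < infinity: the range lies in the span of finitely many vectors *)
Definition finite_rank_defect (f : nat -> vec) : Prop :=
  exists (m : nat) (v : nat -> vec), (forall j, l2 (v j)) /\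
    forall x, l2 x -> exists c : nat -> R * R, forall i,
      (fst (x i) - fst (frame_op f x i), snd (x i) - snd (frame_op f x i))
      = lincomb m c v i.

Definition prepend (k : nat) (xs : nat -> vec) (f : nat -> vec) (n : nat) : vec :=
  if Nat.ltb n k then xs n else f (n - k)%nat.

Definition parseval (g : nat -> vec) : Prop :=
  (forall n, l2 (g n)) /\
  forall y, l2 y -> infinite_sum (fun n => cabs2 (ip y (g n))) (nrm2 y).

(* Main.v *)
Require Import Defs.
From Stdlib Require Import Reals.
Open Scope R_scope.
From Coquelicot Require Import Coquelicot.
From Stdlib Require Import Reals Lra Lia List Classical ClassicalEpsilon FunctionalExtensionality.
From mathcomp Require ssreflect ssrbool ssrfun eqtype ssrnat seq fintype bigop ssralg matrix mxalgebra Rstruct.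
Set Bullet Behavior "Strict Subproofs".
Import ListNotations.
Open Scope R_scope.

Module MX.
Import ssreflect ssrbool ssrfun eqtype ssrnat seq fintype bigop ssralg matrix mxalgebra Rstruct.
Import GRing.Theory.
Local Open Scope ring_scope.

Lemma fsum_big (s : nat) (u : nat -> R) : fsum s u = (\sum_(k < s) u (nat_of_ord k))%R.
Proof. elim: s => [|s IH]. by rewrite big_ord0. rewrite big_ord_recr /= IH. reflexivity. Qed.

Lemma left_inverse (s : nat) (G : nat -> nat -> R) :
  (forall a : nat -> R, (forall i, (i < s)%coq_nat -> fsum s (fun j => Rmult (a j) (G j i)) = 0%R) ->
     forall j, (j < s)%coq_nat -> a j = 0%R) ->
  exists H : nat -> nat -> R, forall i j, (i < s)%coq_nat -> (j < s)%coq_nat ->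
    fsum s (fun k => Rmult (H i k) (G k j)) = (if Nat.eqb i j then 1 else 0)%R.
Proof.
  move=> Hinj.
  pose Gm := (\matrix_(i < s, j < s) G (nat_of_ord i) (nat_of_ord j) : 'M[R]_s).
  have Hfree : row_free Gm.
  { rewrite -kermx_eq0. apply/eqP. apply/matrixP => r c.
    have Hk := mulmx_ker Gm.
    set K := kermx Gm in Hk *.
    have := Hinj (fun j => if (j < s)%N =P true is ReflectT P then K r (Ordinal P) else 0%R).
    move=> H. rewrite [RHS]mxE.
    have -> : K r c = (if (nat_of_ord c < s)%N =P true is ReflectT P then K r (Ordinal P) else 0%R).
    { case: eqP => // P. f_equal. apply: val_inj. reflexivity. by rewrite (ltn_ord c) in P. }
    apply: H; last by apply/ltP.
    move=> i Hi. rewrite fsum_big.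
    transitivity ((K *m Gm) r (Ordinal (introT ltP Hi))); last by rewrite Hk mxE.
    rewrite mxE. apply: eq_bigr => k _. case: eqP => P; last by rewrite (ltn_ord k) in P.
    rewrite [Gm k _]mxE. have -> : Ordinal P = k by apply: val_inj. by []. }
  have Hu : Gm \in unitmx by rewrite -row_free_unit.
  exists (fun i k => if (i < s)%N =P true is ReflectT P then
                     if (k < s)%N =P true is ReflectT Q then invmx Gm (Ordinal P) (Ordinal Q) else 0%R else 0%R).
  move=> i j Hi Hj.
  have /matrixP /(_ (Ordinal (introT ltP Hi)) (Ordinal (introT ltP Hj))) := mulVmx Hu.
  rewrite !mxE fsum_big => E.
  transitivity (((Ordinal (introT ltP Hi) == Ordinal (introT ltP Hj) :> 'I_s)%:R) : R); last first.
  { case: (Nat.eqb_spec i j) => [EQ|NE].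
    - subst j. case: eqP => [_|NE]; first reflexivity. exfalso; apply: NE; apply: val_inj; reflexivity.
    - case: eqP => [EQ|_]; last reflexivity. exfalso; apply: NE. exact: (congr1 val EQ). }
  rewrite -E. apply: eq_bigr => k _.
  case: eqP => P; last by exfalso; apply: P; apply/ltP.
  case: eqP => Q; last by rewrite (ltn_ord k) in Q.
  rewrite [Gm k _]mxE.
  have -> : Ordinal Q = k by apply: val_inj.
  have -> : Ordinal P = Ordinal (introT ltP Hi) by apply: val_inj.
  by [].
Qed.
End MX.
Lemma left_inv (s : nat) (G : nat -> nat -> R) :
  (forall a : nat -> R, (forall i, (i < s)%nat -> fsum s (fun j => a j * G j i) = 0) ->
     forall j, (j < s)%nat -> a j = 0) ->
  exists H : nat -> nat -> R, forall i j, (i < s)%nat -> (j < s)%nat ->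
    fsum s (fun k => H i k * G k j) = (if Nat.eqb i j then 1 else 0).
Proof. intros Hinj. destruct (MX.left_inverse s G Hinj) as [H HH]. exists H. exact HH. Qed.

Lemma ser_ext (a b : nat -> R) l : (forall n, a n = b n) -> infinite_sum a l -> infinite_sum b l.
Proof. intros H. replace b with a; auto. apply functional_extensionality; auto. Qed.

Lemma ser_plus (a b : nat -> R) la lb : infinite_sum a la -> infinite_sum b lb ->
  infinite_sum (fun n => a n + b n) (la+lb).
Proof. rewrite <- !is_series_Reals. intros. apply (is_series_plus a b la lb); auto. Qed.

Lemma ser_scal (a : nat -> R) c la : infinite_sum a la -> infinite_sum (fun n => c * a n) (c*la).
Proof. rewrite <- !is_series_Reals. intros. apply (is_series_scal c a la); auto. Qed.

Lemma ser_opp (a : nat -> R) la : infinite_sum a la -> infinite_sum (fun n => - a n) (- la).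
Proof. intros H. apply (ser_ext (fun n => -1 * a n)). intros; ring.
  replace (-la) with (-1*la) by ring. apply ser_scal; auto. Qed.

Lemma ser_minus (a b : nat -> R) la lb : infinite_sum a la -> infinite_sum b lb ->
  infinite_sum (fun n => a n - b n) (la-lb).
Proof. intros. apply ser_plus; auto. apply ser_opp; auto. Qed.

Lemma ser_unique (a : nat -> R) l1 l2 : infinite_sum a l1 -> infinite_sum a l2 -> l1 = l2.
Proof. apply uniqueness_sum. Qed.

Lemma ser_zero : infinite_sum (fun _ => 0) 0.
Proof. intros eps He. exists 0%nat. intros n _.
  assert (sum_f_R0 (fun _ => 0) n = 0) as -> by (induction n; simpl; auto; rewrite IHn; ring).
  unfold Rdist. rewrite Rminus_diag, Rabs_R0. lra. Qed.

Lemma ser_fsum (s : nat) (u : nat -> nat -> R) (l : nat -> R) :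
  (forall j, (j < s)%nat -> infinite_sum (u j) (l j)) ->
  infinite_sum (fun p => fsum s (fun j => u j p)) (fsum s l).
Proof. induction s; intros H; simpl.
  - apply ser_zero.
  - apply ser_plus. apply IHs; intros; apply H; lia. apply H; lia. Qed.

Lemma ser_delta (c : nat) (x : R) : infinite_sum (fun p => if Nat.eqb p c then x else 0) x.
Proof.
  assert (H : forall n, (n >= c)%nat -> sum_f_R0 (fun p => if Nat.eqb p c then x else 0) n = x).
  { assert (H0 : forall m, (m < c)%nat -> sum_f_R0 (fun p => if Nat.eqb p c then x else 0) m = 0).
    { intros m; induction m as [|m IH]; intros; cbn -[Nat.eqb].
      - destruct (Nat.eqb 0 c) eqn:E; auto. apply Nat.eqb_eq in E; lia.
      - rewrite IH by lia. destruct (Nat.eqb (S m) c) eqn:E. apply Nat.eqb_eq in E; lia. ring. }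
    intros n; induction n as [|n IH]; intros Hn.
    - cbn -[Nat.eqb]. replace c with 0%nat by lia. auto.
    - destruct (Nat.eq_dec (S n) c).
      + cbn -[Nat.eqb]. rewrite H0 by lia. subst. rewrite Nat.eqb_refl. ring.
      + cbn -[Nat.eqb]. rewrite IH by lia. destruct (Nat.eqb (S n) c) eqn:E. apply Nat.eqb_eq in E; lia. ring. }
  intros eps Heps. exists c. intros n Hn. rewrite H by auto. unfold Rdist. rewrite Rminus_diag, Rabs_R0. lra.
Qed.

Lemma ser_le (a b : nat -> R) la lb : (forall n, a n <= b n) ->
  infinite_sum a la -> infinite_sum b lb -> la <= lb.
Proof. intros H Ha Hb.
  assert (X := is_lim_seq_le (sum_f_R0 a) (sum_f_R0 b) la lb).
  simpl in X. apply X. intros; apply sum_Rle; auto.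
  apply is_lim_seq_Reals; auto. apply is_lim_seq_Reals; auto. Qed.

Lemma ser_ge0 (a : nat -> R) l : (forall n, 0 <= a n) -> infinite_sum a l -> 0 <= l.
Proof. intros. apply (ser_le (fun _ => 0) a); auto. apply ser_zero. Qed.

Lemma ser_ex_le (a b : nat -> R) lb : (forall n, 0 <= a n <= b n) -> infinite_sum b lb ->
  exists la, infinite_sum a la /\ la <= lb.
Proof. intros H Hb.
  assert (E : ex_series a).
  { apply (ex_series_le a b). intros n. unfold norm; simpl. unfold abs; simpl.
    rewrite Rabs_pos_eq; apply H. exists lb. apply is_series_Reals; auto. }
  destruct E as [la Ha]. exists la. apply is_series_Reals in Ha. split; auto.
  apply (ser_le a b); auto. intros n; apply H. Qed.

Lemma ser_term_le (a : nat -> R) l m : (forall n, 0 <= a n) -> infinite_sum a l -> a m <= l.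
Proof. intros Ha H.
  apply (ser_le (fun p => if Nat.eqb p m then a m else 0) a). intros n.
  destruct (Nat.eqb n m) eqn:E. apply Nat.eqb_eq in E; subst; lra. auto.
  apply ser_delta. auto. Qed.

Lemma ser_zero_terms (a : nat -> R) : (forall n, 0 <= a n) -> infinite_sum a 0 -> forall n, a n = 0.
Proof. intros Ha H n. pose proof (ser_term_le a 0 n Ha H). specialize (Ha n). lra. Qed.

Lemma ser_abs_prod (x y : nat -> R) X Y : infinite_sum (fun p => x p ^ 2) X ->
  infinite_sum (fun p => y p ^ 2) Y -> exists P, infinite_sum (fun p => x p * y p) P.
Proof. intros HX HY.
  assert (E : ex_series (fun p => x p * y p)).
  { apply (@ex_series_le R_AbsRing R_CompleteNormedModule (fun p => x p * y p) (fun p => (x p ^2 + y p ^ 2) / 2)). intros n. unfold norm; simpl. unfold abs; simpl.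
    rewrite Rabs_mult. pose proof (pow2_ge_0 (Rabs (x n) - Rabs (y n))).
    pose proof (pow2_abs (x n)); pose proof (pow2_abs (y n)). simpl in *. nra.
    exists ((X + Y)/2). apply is_series_Reals.
    apply (ser_ext (fun p => /2 * (x p ^ 2 + y p ^ 2))). intros; field.
    replace ((X+Y)/2) with (/2 * (X + Y)) by field. apply ser_scal. apply ser_plus; auto. }
  destruct E as [P HP]. exists P. apply is_series_Reals; auto. Qed.

Lemma ser_CS (x y : nat -> R) X Y P : infinite_sum (fun p => x p ^ 2) X ->
  infinite_sum (fun p => y p ^ 2) Y -> infinite_sum (fun p => x p * y p) P -> P ^ 2 <= X * Y.
Proof. intros HX HY HP.
  assert (Q : forall t, 0 <= X + 2 * t * P + t ^ 2 * Y).
  { intros t. apply (ser_ge0 (fun p => (x p + t * y p) ^ 2)). intros; apply pow2_ge_0.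
    apply (ser_ext (fun p => (x p ^2 + (2 * t) * (x p * y p)) + t^2 * y p ^ 2)). intros; ring.
    apply ser_plus. apply ser_plus; auto. apply ser_scal; auto. apply ser_scal; auto. }
  assert (HY0 : 0 <= Y) by (apply (ser_ge0 _ _ (fun p => pow2_ge_0 (y p)) HY)).
  assert (HX0 : 0 <= X) by (apply (ser_ge0 _ _ (fun p => pow2_ge_0 (x p)) HX)).
  destruct (Req_dec Y 0) as [Y0|Y0].
  - subst. destruct (Req_dec P 0). subst; nra.
    specialize (Q (- (X + 1) / (2 * P))).
    assert (X + 2 * (- (X + 1) / (2 * P)) * P + (- (X + 1) / (2 * P)) ^ 2 * 0 = -1) by (field; auto). lra.
  - specialize (Q (- P / Y)). assert (0 < Y) by lra.
    assert (X + 2 * (- P / Y) * P + (- P / Y) ^ 2 * Y = (X * Y - P^2) / Y) by (field; auto).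
    rewrite H0 in Q. assert (0 <= X * Y - P ^ 2). { apply (Rmult_le_pos _ Y) in Q; [|lra].
    replace ((X * Y - P ^ 2) / Y * Y) with (X*Y - P^2) in Q by (field; auto). auto. } lra.
Qed.

Lemma ser_step (u : nat -> R) l : infinite_sum u l -> infinite_sum (fun n => u (S n)) (l - u 0%nat).
Proof. rewrite <- !is_series_Reals. intros H. apply (is_series_incr_1 u).
  unfold plus; simpl. replace (l - u 0%nat + u 0%nat) with l by ring. auto. Qed.

Lemma ser_unstep (u : nat -> R) l : infinite_sum (fun n => u (S n)) l -> infinite_sum u (l + u 0%nat).
Proof. rewrite <- !is_series_Reals. intros H. apply (is_series_decr_1 u).
  unfold plus, opp; simpl. replace (l + u 0%nat + - u 0%nat) with l by ring. auto. Qed.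

Lemma fsum_shift1 (k : nat) (u : nat -> R) : fsum (S k) u = u 0%nat + fsum k (fun n => u (S n)).
Proof. induction k; simpl in *. ring. rewrite IHk. ring. Qed.

Lemma ser_drop (k : nat) : forall (u : nat -> R) l, infinite_sum u l ->
  infinite_sum (fun n => u (n + k)%nat) (l - fsum k u).
Proof. induction k; intros u l H.
  - simpl. apply (ser_ext u). intros; f_equal; lia. replace (l - 0) with l by ring. auto.
  - apply ser_step in H. apply IHk in H. rewrite fsum_shift1.
    apply (ser_ext (fun n => u (S (n + k)))). intros; f_equal; lia.
    replace (l - (u 0%nat + fsum k (fun n : nat => u (S n)))) with (l - u 0%nat - fsum k (fun n : nat => u (S n))) by ring. auto.
Qed.

Lemma ser_undrop (k : nat) : forall (u : nat -> R) l, infinite_sum (fun n => u (n + k)%nat) l ->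
  infinite_sum u (l + fsum k u).
Proof. induction k; intros u l H.
  - simpl. replace (l + 0) with l by ring. apply (ser_ext (fun n => u (n+0)%nat)). intros; f_equal; lia. auto.
  - rewrite fsum_shift1.
    replace (l + (u 0%nat + fsum k (fun n : nat => u (S n)))) with (l + fsum k (fun n : nat => u (S n)) + u 0%nat) by ring.
    apply ser_unstep. apply IHk. apply (ser_ext (fun n => u (n + S k)%nat)). intros; f_equal; lia. auto.
Qed.

Lemma fsum_ext (k : nat) (u v : nat -> R) : (forall n, (n < k)%nat -> u n = v n) -> fsum k u = fsum k v.
Proof. induction k; intros H; simpl; auto. rewrite IHk by (intros; apply H; lia). rewrite H by lia. auto. Qed.

Lemma fsum_zero (k : nat) (u : nat -> R) : (forall n, (n < k)%nat -> u n = 0) -> fsum k u = 0.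
Proof. intros H. rewrite (fsum_ext k u (fun _ => 0)) by auto. clear H. induction k; simpl; auto. rewrite IHk; ring. Qed.

Lemma ser_shift_out (k : nat) (u : nat -> R) l : infinite_sum u l -> (forall n, (n < k)%nat -> u n = 0) ->
  infinite_sum (fun n => u (n + k)%nat) l.
Proof. intros H Z. apply ser_drop with (k := k) in H. rewrite fsum_zero in H by auto.
  replace (l - 0) with l in H by ring. auto. Qed.

Lemma ser_shift_in (k : nat) (u : nat -> R) l : infinite_sum u l ->
  infinite_sum (fun n => if Nat.ltb n k then 0 else u (n - k)%nat) l.
Proof. intros H. replace l with (l + fsum k (fun n => if Nat.ltb n k then 0 else u (n - k)%nat)).
  apply ser_undrop. apply (ser_ext u); auto. intros n.
  destruct (Nat.ltb (n + k) k) eqn:E. apply Nat.ltb_lt in E; lia. f_equal; lia.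
  rewrite fsum_zero. ring. intros n Hn. apply Nat.ltb_lt in Hn. rewrite Hn. auto.
Qed.

Lemma sum_pair (a : nat -> R) K : sum_f_R0 (fun n => a (2 * n)%nat + a (S (2 * n))) K = sum_f_R0 a (S (2 * K)).
Proof. induction K.
  - simpl. auto.
  - rewrite tech5, IHK.
    replace (S (2 * S K)) with (S (S (S (2 * K)))) by lia.
    replace (2 * S K)%nat with (S (S (2 * K))) by lia. rewrite !tech5. ring. Qed.

Lemma ser_pair_of (a : nat -> R) l : infinite_sum a l -> infinite_sum (fun n => a (2 * n)%nat + a (S (2 * n))) l.
Proof. intros H eps He. destruct (H eps He) as [N HN]. exists N. intros n Hn.
  rewrite sum_pair. apply HN. lia. Qed.

Lemma sum_mono (a : nat -> R) m n : (forall p, 0 <= a p) -> (m <= n)%nat -> sum_f_R0 a m <= sum_f_R0 a n.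
Proof. intros Ha Hmn. induction Hmn. lra. simpl. specialize (Ha (S m0)). lra. Qed.

Lemma ser_of_pair (a : nat -> R) l : (forall p, 0 <= a p) ->
  infinite_sum (fun n => a (2 * n)%nat + a (S (2 * n))) l -> infinite_sum a l.
Proof. intros Ha H.
  assert (Hle : forall K, sum_f_R0 a (S (2 * K)) <= l).
  { intros K. destruct (Rle_dec (sum_f_R0 a (S (2 * K))) l) as [|Hn]; auto.
    exfalso. destruct (H (sum_f_R0 a (S (2 * K)) - l)) as [N HN]. lra.
    specialize (HN (max N K) (Nat.le_max_l _ _)). rewrite sum_pair in HN.
    assert (sum_f_R0 a (S (2 * K)) <= sum_f_R0 a (S (2 * max N K))).
    { apply sum_mono; auto. lia. }
    unfold Rdist in HN. rewrite Rabs_pos_eq in HN; lra. }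
  intros eps He. destruct (H eps He) as [N HN]. exists (S (2 * N)). intros n Hn.
  set (K := Nat.div2 (n - 1)).
  assert (HK1 : (S (2 * K) <= n)%nat). { pose proof (Nat.div2_odd (n-1)). destruct (Nat.odd (n - 1)); simpl in *; lia. }
  assert (HK2 : (n <= S (2 * S K))%nat). { pose proof (Nat.div2_odd (n-1)). destruct (Nat.odd (n - 1)); simpl in *; lia. }
  assert (HKN : (K >= N)%nat). { pose proof (Nat.div2_odd (n-1)). destruct (Nat.odd (n - 1)); simpl in *; lia. }
  specialize (HN K HKN). rewrite sum_pair in HN.
  pose proof (sum_mono a _ _ Ha HK1). pose proof (sum_mono a _ _ Ha HK2). pose proof (Hle (S K)).
  unfold Rdist in *. apply Rabs_def2 in HN. apply Rabs_def1; lra.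
Qed.

Lemma series_val_eq (u : nat -> R) l : infinite_sum u l -> series_val u = l.
Proof. intros H. unfold series_val. destruct (excluded_middle_informative _) as [E|E].
  - destruct (constructive_indefinite_description _ E) as [l' H']. simpl. eapply ser_unique; eauto.
  - exfalso; apply E; eauto. Qed.

Definition vadd (x y : vec) : vec := fun i => (fst (x i) + fst (y i), snd (x i) + snd (y i)).
Definition vscal (c : R) (x : vec) : vec := fun i => (c * fst (x i), c * snd (x i)).
Definition vzero : vec := fun _ => (0, 0).
Definition Jv (x : vec) : vec := fun i => (- snd (x i), fst (x i)).
Definition dterm (x y : vec) (i : nat) : R := fst (x i) * fst (y i) + snd (x i) * snd (y i).
Fixpoint vsum (s : nat) (F : nat -> vec) : vec :=
  match s with O => vzero | S s' => vadd (vsum s' F) (F s') end.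

Lemma nrm2_conv x : l2 x -> infinite_sum (fun i => cabs2 (x i)) (nrm2 x).
Proof. intros [l H]. unfold nrm2. rewrite (series_val_eq _ l H). auto. Qed.

Lemma cabs2_ge0 z : 0 <= cabs2 z.
Proof. unfold cabs2. pose proof (pow2_ge_0 (fst z)). pose proof (pow2_ge_0 (snd z)). lra. Qed.

Lemma nrm2_ge0 x : l2 x -> 0 <= nrm2 x.
Proof. intros H. apply (ser_ge0 _ _ (fun i => cabs2_ge0 (x i)) (nrm2_conv x H)). Qed.

Lemma l2_fst x : l2 x -> exists l, infinite_sum (fun i => fst (x i) ^ 2) l.
Proof. intros H. destruct (ser_ex_le (fun i => fst (x i) ^ 2) (fun i => cabs2 (x i)) (nrm2 x) ltac:(intros n; cbv beta; unfold cabs2;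
  split; [apply pow2_ge_0|]; pose proof (pow2_ge_0 (snd (x n))); pose proof (pow2_ge_0 (fst (x n))); nra) (nrm2_conv x H)) as [l [Hl _]].
  eauto. Qed.

Lemma l2_snd x : l2 x -> exists l, infinite_sum (fun i => snd (x i) ^ 2) l.
Proof. intros H. destruct (ser_ex_le (fun i => snd (x i) ^ 2) (fun i => cabs2 (x i)) (nrm2 x) ltac:(intros n; cbv beta; unfold cabs2;
  split; [apply pow2_ge_0|]; pose proof (pow2_ge_0 (snd (x n))); pose proof (pow2_ge_0 (fst (x n))); nra) (nrm2_conv x H)) as [l [Hl _]].
  eauto. Qed.

Lemma dterm_ex x y : l2 x -> l2 y -> exists l, infinite_sum (dterm x y) l.
Proof. intros Hx Hy.
  destruct (l2_fst x Hx) as [a1 H1]. destruct (l2_snd x Hx) as [a2 H2].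
  destruct (l2_fst y Hy) as [b1 H3]. destruct (l2_snd y Hy) as [b2 H4].
  destruct (ser_abs_prod _ _ _ _ H1 H3) as [P1 HP1]. destruct (ser_abs_prod _ _ _ _ H2 H4) as [P2 HP2].
  exists (P1 + P2). apply ser_plus; auto. Qed.

Lemma ipr_conv x y : l2 x -> l2 y -> infinite_sum (dterm x y) (ipr x y).
Proof. intros Hx Hy. destruct (dterm_ex x y Hx Hy) as [l H]. unfold ipr.
  replace (fun i => fst (x i) * fst (y i) + snd (x i) * snd (y i)) with (dterm x y) by reflexivity.
  rewrite (series_val_eq _ l H). auto. Qed.

Lemma ipr_sym x y : ipr x y = ipr y x.
Proof. unfold ipr. f_equal. apply functional_extensionality; intros; ring. Qed.

Lemma nrm2_ipr x : nrm2 x = ipr x x.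
Proof. unfold nrm2, ipr. f_equal. apply functional_extensionality; intros; unfold cabs2; ring. Qed.

Lemma ipi_J x y : ipi x y = ipr x (Jv y).
Proof. unfold ipi, ipr, Jv. f_equal. apply functional_extensionality; intros; simpl; ring. Qed.

Lemma l2_add x y : l2 x -> l2 y -> l2 (vadd x y).
Proof. intros Hx Hy.
  destruct (ser_ex_le (fun i => cabs2 (vadd x y i)) (fun i => 2 * cabs2 (x i) + 2 * cabs2 (y i)) (2 * nrm2 x + 2 * nrm2 y)) as [l [Hl _]].
  - intros n; split. apply cabs2_ge0. unfold cabs2, vadd; simpl.
    pose proof (pow2_ge_0 (fst (x n) - fst (y n))). pose proof (pow2_ge_0 (snd (x n) - snd (y n))). nra.
  - apply ser_plus; apply ser_scal; apply nrm2_conv; auto.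
  - exists l; auto. Qed.

Lemma l2_scal c x : l2 x -> l2 (vscal c x).
Proof. intros Hx. exists (c^2 * nrm2 x). apply (ser_ext (fun i => c^2 * cabs2 (x i))).
  intros; unfold cabs2, vscal; simpl; ring. apply ser_scal. apply nrm2_conv; auto. Qed.

Lemma l2_J x : l2 x -> l2 (Jv x).
Proof. intros Hx. exists (nrm2 x). apply (ser_ext (fun i => cabs2 (x i))).
  intros; unfold cabs2, Jv; simpl; ring. apply nrm2_conv; auto. Qed.

Lemma l2_zero : l2 vzero.
Proof. exists 0. apply (ser_ext (fun _ => 0)). intros; unfold cabs2, vzero; simpl; ring. apply ser_zero. Qed.

Lemma l2_vsum s F : (forall j, (j < s)%nat -> l2 (F j)) -> l2 (vsum s F).
Proof. induction s; intros H; simpl. apply l2_zero. apply l2_add. apply IHs; intros; apply H; lia. apply H; lia. Qed.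

Lemma ipr_add_l x y z : l2 x -> l2 y -> l2 z -> ipr (vadd x y) z = ipr x z + ipr y z.
Proof. intros Hx Hy Hz. apply series_val_eq.
  apply (ser_ext (fun i => dterm x z i + dterm y z i)). intros; unfold dterm, vadd; simpl; ring.
  apply ser_plus; apply ipr_conv; auto. Qed.

Lemma ipr_scal_l c x z : l2 x -> l2 z -> ipr (vscal c x) z = c * ipr x z.
Proof. intros Hx Hz. apply series_val_eq.
  apply (ser_ext (fun i => c * dterm x z i)). intros; unfold dterm, vscal; simpl; ring.
  apply ser_scal; apply ipr_conv; auto. Qed.

Lemma ipr_zero_l z : ipr vzero z = 0.
Proof. apply series_val_eq. apply (ser_ext (fun _ => 0)). intros; unfold vzero; simpl; ring. apply ser_zero. Qed.

Lemma ipr_vsum_l s F z : (forall j, (j < s)%nat -> l2 (F j)) -> l2 z ->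
  ipr (vsum s F) z = fsum s (fun j => ipr (F j) z).
Proof. induction s; intros H Hz; simpl. apply ipr_zero_l.
  assert (H1 : forall j, (j < s)%nat -> l2 (F j)) by (intros; apply H; lia).
  assert (H2 : l2 (F s)) by (apply H; lia).
  rewrite ipr_add_l; auto. rewrite IHs; auto. apply l2_vsum; auto. Qed.

Lemma ipr_JJ x y : ipr (Jv x) (Jv y) = ipr x y.
Proof. unfold ipr, Jv. f_equal. apply functional_extensionality; intros; simpl; ring. Qed.

Lemma ipr_Jl x y : l2 x -> l2 y -> ipr (Jv x) y = - ipr x (Jv y).
Proof. intros Hx Hy. apply series_val_eq.
  apply (ser_ext (fun i => - dterm x (Jv y) i)). intros; unfold dterm, Jv; simpl; ring.
  apply ser_opp. apply ipr_conv; auto. apply l2_J; auto. Qed.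

Lemma cabs2_ip y g : cabs2 (ip y g) = ipr y g ^ 2 + ipr y (Jv g) ^ 2.
Proof. unfold cabs2, ip; simpl. rewrite ipi_J. auto. Qed.

Definition hfam (g : nat -> vec) (m : nat) : vec :=
  if Nat.odd m then Jv (g (Nat.div2 m)) else g (Nat.div2 m).

Lemma hfam_even g n : hfam g (2 * n) = g n.
Proof. unfold hfam. rewrite Nat.odd_mul, Nat.div2_double. reflexivity. Qed.

Lemma hfam_odd g n : hfam g (S (2 * n)) = Jv (g n).
Proof. unfold hfam. rewrite Nat.odd_succ, Nat.even_mul, Nat.div2_succ_double. reflexivity. Qed.

Lemma hfam_l2 g : (forall n, l2 (g n)) -> forall m, l2 (hfam g m).
Proof. intros H m. unfold hfam. destruct (Nat.odd m). apply l2_J; auto. auto. Qed.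

Lemma parseval_real g : (forall n, l2 (g n)) ->
  (forall y, l2 y -> infinite_sum (fun n => cabs2 (ip y (g n))) (nrm2 y)) ->
  forall y, l2 y -> infinite_sum (fun m => ipr y (hfam g m) ^ 2) (nrm2 y).
Proof. intros Hl Hp y Hy. apply ser_of_pair. intros; apply pow2_ge_0.
  apply (ser_ext (fun n => cabs2 (ip y (g n)))). intros n. rewrite hfam_even, hfam_odd. apply cabs2_ip.
  auto. Qed.

Lemma polarize (h : nat -> vec) : (forall m, l2 (h m)) ->
  (forall y, l2 y -> infinite_sum (fun m => ipr y (h m) ^ 2) (nrm2 y)) ->
  forall y z, l2 y -> l2 z -> infinite_sum (fun m => ipr y (h m) * ipr z (h m)) (ipr y z).
Proof. intros Hl Hp y z Hy Hz.
  pose proof (Hp _ (l2_add y z Hy Hz)) as H1.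
  assert (E1 : forall m, ipr (vadd y z) (h m) = ipr y (h m) + ipr z (h m)) by (intros; apply ipr_add_l; auto).
  assert (E2 : nrm2 (vadd y z) = nrm2 y + 2 * ipr y z + nrm2 z).
  { rewrite !nrm2_ipr. rewrite ipr_add_l; auto. rewrite (ipr_sym y (vadd y z)), (ipr_sym z (vadd y z)).
    rewrite !ipr_add_l; auto. rewrite (ipr_sym z y). ring. apply l2_add; auto. }
  rewrite E2 in H1.
  pose proof (ser_minus _ _ _ _ (ser_minus _ _ _ _ H1 (Hp y Hy)) (Hp z Hz)) as H2.
  replace (ipr y z) with (/2 * (nrm2 y + 2 * ipr y z + nrm2 z - nrm2 y - nrm2 z)) by field.
  apply (ser_ext (fun m => /2 * (ipr (vadd y z) (h m) ^ 2 - ipr y (h m) ^ 2 - ipr z (h m) ^ 2))).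
  intros m. rewrite E1. field. apply ser_scal. auto. Qed.

Lemma fsum_plus s (u v : nat -> R) : fsum s (fun j => u j + v j) = fsum s u + fsum s v.
Proof. induction s; simpl. ring. rewrite IHs. ring. Qed.
Lemma fsum_mult_l s c (u : nat -> R) : c * fsum s u = fsum s (fun j => c * u j).
Proof. induction s; simpl. ring. rewrite <- IHs. ring. Qed.
Lemma fsum_mult_r s c (u : nat -> R) : fsum s u * c = fsum s (fun j => u j * c).
Proof. induction s; simpl. ring. rewrite <- IHs. ring. Qed.
Lemma fsum_opp s (u : nat -> R) : - fsum s u = fsum s (fun j => - u j).
Proof. induction s; simpl. ring. rewrite <- IHs. ring. Qed.
Lemma fsum_swap s t (u : nat -> nat -> R) :
  fsum s (fun i => fsum t (fun j => u i j)) = fsum t (fun j => fsum s (fun i => u i j)).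
Proof. induction s; simpl. rewrite fsum_zero; auto. rewrite IHs. rewrite <- fsum_plus. auto. Qed.
Lemma fsum_delta s (z : nat -> R) l : (l < s)%nat -> fsum s (fun j => z j * (if Nat.eqb l j then 1 else 0)) = z l.
Proof. induction s; intros H. lia. simpl. destruct (Nat.eq_dec l s).
  - subst. rewrite fsum_zero. rewrite Nat.eqb_refl. ring. intros n Hn.
    destruct (Nat.eqb s n) eqn:E. apply Nat.eqb_eq in E; lia. ring.
  - rewrite IHs by lia. destruct (Nat.eqb l s) eqn:E. apply Nat.eqb_eq in E; lia. ring. Qed.
Lemma fsum_delta' s (z : nat -> R) l : (l < s)%nat -> fsum s (fun j => (if Nat.eqb j l then 1 else 0) * z j) = z l.
Proof. intros H. rewrite <- (fsum_delta s z l H). apply fsum_ext. intros n _.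
  rewrite Nat.eqb_sym. ring. Qed.
Lemma fsum_abs s (u : nat -> R) : Rabs (fsum s u) <= fsum s (fun j => Rabs (u j)).
Proof. induction s; simpl. rewrite Rabs_R0; lra. eapply Rle_trans. apply Rabs_triang. lra. Qed.
Lemma fsum_le s (u v : nat -> R) : (forall j, (j < s)%nat -> u j <= v j) -> fsum s u <= fsum s v.
Proof. induction s; intros H; simpl. lra. assert (u s <= v s) by (apply H; lia).
  assert (fsum s u <= fsum s v) by (apply IHs; intros; apply H; lia). lra. Qed.
Lemma fsum_ge0 s (u : nat -> R) : (forall j, (j < s)%nat -> 0 <= u j) -> 0 <= fsum s u.
Proof. intros H. replace 0 with (fsum s (fun _ => 0)). apply fsum_le; auto. apply fsum_zero; auto. Qed.
Lemma fsum_zero_terms s (u : nat -> R) : (forall j, (j < s)%nat -> 0 <= u j) -> fsum s u = 0 -> forall j, (j < s)%nat -> u j = 0.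
Proof. induction s; intros H E j Hj. lia. simpl in E.
  assert (0 <= fsum s u) by (apply fsum_ge0; intros; apply H; lia). assert (0 <= u s) by (apply H; lia).
  destruct (Nat.eq_dec j s). subst; lra. apply IHs. intros; apply H; lia. lra. lia. Qed.

Section Core.
Variable M : nat -> nat -> R.
Hypothesis Msym : forall a b, M a b = M b a.
Hypothesis M3 : forall a b, infinite_sum (fun p => M a p * M b p) (M a b).

Definition qv (a p : nat) : R := (if Nat.eqb a p then 1 else 0) - M a p.
Definition Ln (L : list nat) (j : nat) : nat := nth j L 0%nat.
Definition Gm (L : list nat) (j i : nat) : R := qv (Ln L j) (Ln L i).
Definition injG (L : list nat) : Prop := forall a : nat -> R,
  (forall i, (i < length L)%nat -> fsum (length L) (fun j => a j * Gm L j i) = 0) ->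
  forall j, (j < length L)%nat -> a j = 0.
Definition inspan (L : list nat) (w : nat -> R) : Prop :=
  exists c : nat -> R, forall p, w p = fsum (length L) (fun j => c j * qv (Ln L j) p).

Lemma qv_sym a b : qv a b = qv b a.
Proof. unfold qv. rewrite Nat.eqb_sym, Msym. auto. Qed.

Lemma gram a b : infinite_sum (fun p => qv a p * qv b p) (qv a b).
Proof.
  apply (ser_ext (fun p => ((if Nat.eqb p b then (if Nat.eqb a b then 1 else 0) else 0)
     - (if Nat.eqb p a then M b a else 0)) - (if Nat.eqb p b then M a b else 0) + M a p * M b p)).
  { intros p. unfold qv.
    destruct (Nat.eqb_spec p a); destruct (Nat.eqb_spec p b); destruct (Nat.eqb_spec a b);
    destruct (Nat.eqb_spec a p); destruct (Nat.eqb_spec b p); subst; try lia; try ring. }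
  replace (qv a b) with ((if Nat.eqb a b then 1 else 0) - M b a - M a b + M a b).
  apply ser_plus; auto. apply ser_minus. apply ser_minus. apply ser_delta. apply ser_delta. apply ser_delta.
  unfold qv. rewrite Msym. ring.
Qed.

Lemma Mdiag a : 0 <= M a a <= 1.
Proof. pose proof (M3 a a) as H.
  assert (0 <= M a a) by (apply (ser_ge0 _ _ (fun p => Rle_0_sqr (M a p)) H)).
  pose proof (ser_term_le _ _ a (fun p => Rle_0_sqr (M a p)) H). cbv beta in *. split; auto. destruct (Rle_dec (M a a) 1) as [|n]; auto. exfalso. assert (0 < M a a * (M a a - 1)) by (apply Rmult_lt_0_compat; lra). unfold Rsqr in H1. nra. Qed.

Lemma comb_sq (s : nat) (a : nat -> R) (F : nat -> nat) (p : nat) :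
  fsum s (fun j => a j * qv (F j) p) * fsum s (fun j => a j * qv (F j) p) =
  fsum s (fun i => a i * fsum s (fun j => a j * (qv (F j) p * qv (F i) p))).
Proof. rewrite fsum_mult_r. apply fsum_ext. intros i _.
  rewrite Rmult_assoc. f_equal. rewrite Rmult_comm, fsum_mult_r. apply fsum_ext. intros; ring. Qed.

Lemma comb_norm (L : list nat) (a : nat -> R) :
  infinite_sum (fun p => fsum (length L) (fun j => a j * qv (Ln L j) p) ^ 2)
    (fsum (length L) (fun i => a i * fsum (length L) (fun j => a j * Gm L j i))).
Proof. apply (ser_ext (fun p => fsum (length L) (fun i => a i * fsum (length L) (fun j => a j * (qv (Ln L j) p * qv (Ln L i) p))))).
  intros p. rewrite <- comb_sq. ring.
  apply ser_fsum. intros i _. apply ser_scal. apply ser_fsum. intros j _. apply ser_scal. apply gram. Qed.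

Lemma fsum_S s (u : nat -> R) : fsum (S s) u = fsum s u + u s.
Proof. reflexivity. Qed.

Lemma Ln_app_l L m j : (j < length L)%nat -> Ln (L ++ m) j = Ln L j.
Proof. intros. unfold Ln. apply app_nth1; auto. Qed.
Lemma Ln_app_r L m : Ln (L ++ [m]) (length L) = m.
Proof. unfold Ln. rewrite app_nth2 by lia. rewrite Nat.sub_diag. auto. Qed.

Lemma extend (L : list nat) (m : nat) : injG L -> ~ inspan L (qv m) -> injG (L ++ [m]).
Proof. intros Hinj Hns a Ha.
  rewrite length_app in *. simpl in *. replace (length L + 1)%nat with (S (length L)) in * by lia.
  set (s := length L) in *.
  assert (Hw := comb_norm (L ++ [m]) a). rewrite length_app in Hw. simpl in Hw.
  replace (length L + 1)%nat with (S s) in Hw by (unfold s; lia).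
  rewrite fsum_zero in Hw. 2:{ intros i Hi. rewrite Ha by lia. ring. }
  assert (W0 : forall p, fsum (S s) (fun j => a j * qv (Ln (L ++ [m]) j) p) = 0).
  { intros p. pose proof (ser_zero_terms _ (fun p => pow2_ge_0 _) Hw p). cbv beta in H. destruct (Req_dec (fsum (S s) (fun j => a j * qv (Ln (L ++ [m]) j) p)) 0) as [|Hn]; auto. exfalso; exact (pow_nonzero _ 2 Hn H). }
  assert (Hs : a s = 0).
  { destruct (Req_dec (a s) 0); auto. exfalso. apply Hns.
    exists (fun j => - a j / a s). intros p. specialize (W0 p). rewrite fsum_S in W0.
    unfold s in W0 at 2. rewrite Ln_app_r in W0. fold s in W0.
    rewrite (fsum_ext _ _ (fun j => a j * qv (Ln L j) p)) in W0.
    2:{ intros j Hj. rewrite Ln_app_l; auto. }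
    transitivity (- fsum s (fun j => a j * qv (Ln L j) p) / a s).
    { replace (qv m p) with ((a s * qv m p) / a s) by (field; auto).
      replace (a s * qv m p) with (- fsum s (fun j => a j * qv (Ln L j) p)) by lra. auto. }
    unfold Rdiv. rewrite Rmult_comm, fsum_opp, fsum_mult_l. apply fsum_ext. intros; field; auto. }
  assert (HL : forall j, (j < s)%nat -> a j = 0).
  { apply Hinj. intros i Hi. specialize (Ha i ltac:(lia)). rewrite fsum_S, Hs in Ha.
    rewrite <- Ha. unfold Gm. rewrite Rmult_0_l, Rplus_0_r. apply fsum_ext. intros j Hj.
    rewrite !Ln_app_l; auto. }
  intros j Hj. destruct (Nat.eq_dec j s). subst; auto. apply HL; lia.
Qed.

Lemma inspan_ext L w w' : (forall p, w p = w' p) -> inspan L w -> inspan L w'.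
Proof. intros E [c Hc]. exists c. intros; rewrite <- E; auto. Qed.
Lemma inspan_q L j : (j < length L)%nat -> inspan L (qv (Ln L j)).
Proof. intros Hj. exists (fun i => if Nat.eqb i j then 1 else 0). intros p.
  rewrite (fsum_delta' (length L) (fun i => qv (Ln L i) p) j Hj). auto. Qed.
Lemma inspan_add L w w' : inspan L w -> inspan L w' -> inspan L (fun p => w p + w' p).
Proof. intros [c Hc] [c' Hc']. exists (fun j => c j + c' j). intros p. rewrite Hc, Hc', <- fsum_plus.
  apply fsum_ext; intros; ring. Qed.
Lemma inspan_scal L t w : inspan L w -> inspan L (fun p => t * w p).
Proof. intros [c Hc]. exists (fun j => t * c j). intros p. rewrite Hc, fsum_mult_l.
  apply fsum_ext; intros; ring. Qed.
Lemma inspan_zero L : inspan L (fun _ => 0).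
Proof. exists (fun _ => 0). intros p. rewrite fsum_zero; auto. intros; ring. Qed.
Lemma inspan_fsum L t (u : nat -> nat -> R) : (forall j, (j < t)%nat -> inspan L (u j)) ->
  inspan L (fun p => fsum t (fun j => u j p)).
Proof. induction t; intros H; simpl. apply inspan_zero. apply inspan_add. apply IHt; intros; apply H; lia. apply H; lia. Qed.

Definition Kv (w : nat -> R) (p : nat) : R := if Nat.odd p then w (pred p) else - w (S p).
Definition mate (m : nat) : nat := if Nat.odd m then pred m else S m.
Definition sgn (m : nat) : R := if Nat.odd m then -1 else 1.

Hypothesis MJ1 : forall n r, M (S (2 * n)) (2 * r) = - M (2 * n) (S (2 * r)).
Hypothesis MJ2 : forall n r, M (S (2 * n)) (S (2 * r)) = M (2 * n) (2 * r).

Lemma odd_cases (p : nat) : (exists r, p = 2 * r /\ Nat.odd p = false)%nat \/ (exists r, p = S (2 * r) /\ Nat.odd p = true)%nat.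
Proof. pose proof (Nat.div2_odd p). destruct (Nat.odd p) eqn:E; simpl in H.
  right. exists (Nat.div2 p). split; auto; lia. left. exists (Nat.div2 p). split; auto; lia. Qed.

Lemma Kq_even n p : Kv (qv (2 * n)) p = qv (S (2 * n)) p.
Proof. unfold Kv, qv. destruct (odd_cases p) as [[r [-> E]]|[r [-> E]]]; rewrite E.
  - rewrite MJ1. destruct (Nat.eqb (2 * n) (S (2 * r))) eqn:E1. apply Nat.eqb_eq in E1; lia.
    destruct (Nat.eqb (S (2 * n)) (2 * r)) eqn:E2. apply Nat.eqb_eq in E2; lia. ring.
  - replace (pred (S (2 * r))) with (2 * r)%nat by reflexivity. rewrite MJ2. replace (Nat.eqb (S (2 * n)) (S (2 * r))) with (Nat.eqb (2 * n) (2 * r)) by reflexivity. ring.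
Qed.

Lemma KK w p : Kv (Kv w) p = - w p.
Proof. unfold Kv. destruct (odd_cases p) as [[r [-> E]]|[r [-> E]]]; rewrite E.
  - rewrite Nat.odd_succ, Nat.even_mul. simpl. ring.
  - replace (pred (S (2 * r))) with (2 * r)%nat by reflexivity. rewrite Nat.odd_mul. simpl. auto. Qed.

Lemma Kv_ext w w' : (forall p, w p = w' p) -> forall p, Kv w p = Kv w' p.
Proof. intros E p. unfold Kv. rewrite !E. auto. Qed.

Lemma Kq m p : Kv (qv m) p = sgn m * qv (mate m) p.
Proof. unfold sgn, mate. destruct (odd_cases m) as [[r [-> E]]|[r [-> E]]]; rewrite E.
  - rewrite Kq_even. ring.
  - replace (pred (S (2 * r))) with (2 * r)%nat by reflexivity. rewrite <- (Kv_ext _ _ (Kq_even r) p). rewrite KK. ring. Qed.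

Lemma Kv_fsum t (c : nat -> R) (u : nat -> nat -> R) p :
  Kv (fun p => fsum t (fun j => c j * u j p)) p = fsum t (fun j => c j * Kv (u j) p).
Proof. unfold Kv. destruct (Nat.odd p). auto. rewrite fsum_opp. apply fsum_ext; intros; ring. Qed.

Definition pairclosed (L : list nat) : Prop := forall j, (j < length L)%nat -> exists j', (j' < length L)%nat /\ Ln L j' = mate (Ln L j).

Lemma inspan_Kq L j : pairclosed L -> (j < length L)%nat -> inspan L (Kv (qv (Ln L j))).
Proof. intros Hp Hj. destruct (Hp j Hj) as [j' [Hj' E]].
  apply (inspan_ext L (fun p => sgn (Ln L j) * qv (Ln L j') p)).
  intros p. rewrite Kq, E. auto. apply inspan_scal, inspan_q; auto. Qed.

Lemma inspan_K L w : pairclosed L -> inspan L w -> inspan L (Kv w).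
Proof. intros Hp [c Hc].
  apply (inspan_ext L (fun p => fsum (length L) (fun j => c j * Kv (qv (Ln L j)) p))).
  - intros p. rewrite (Kv_ext _ _ Hc). rewrite Kv_fsum. auto.
  - apply inspan_fsum. intros j Hj. apply inspan_scal. apply inspan_Kq; auto. Qed.

Lemma mate_mate m : mate (mate m) = m.
Proof. unfold mate. destruct (odd_cases m) as [[r [-> E]]|[r [-> E]]]; rewrite E.
  rewrite Nat.odd_succ, Nat.even_mul. simpl. auto. replace (pred (S (2 * r))) with (2 * r)%nat by reflexivity. rewrite Nat.odd_mul. simpl. auto. Qed.

Lemma sgn_mate m : sgn (mate m) = - sgn m.
Proof. unfold sgn, mate. destruct (odd_cases m) as [[r [-> E]]|[r [-> E]]]; rewrite E.
  rewrite Nat.odd_succ, Nat.even_mul. simpl. ring. replace (pred (S (2 * r))) with (2 * r)%nat by reflexivity. rewrite Nat.odd_mul. simpl. ring. Qed.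

Lemma sgn_sq m : sgn m * sgn m = 1.
Proof. unfold sgn. destruct (Nat.odd m); ring. Qed.

Lemma extend_pair (L : list nat) (m : nat) : injG L -> pairclosed L -> ~ inspan L (qv m) ->
  injG (L ++ [m; mate m]).
Proof. intros Hinj Hp Hns.
  replace (L ++ [m; mate m]) with ((L ++ [m]) ++ [mate m]) by (rewrite <- app_assoc; auto).
  apply extend. apply extend; auto.
  intros [c Hc]. apply Hns. rewrite length_app in Hc. simpl in Hc.
  replace (length L + 1)%nat with (S (length L)) in Hc by lia.
  set (s := length L) in *.
  set (v := fun p => fsum s (fun j => c j * qv (Ln L j) p)).
  assert (Hv : inspan L v) by (exists c; intros; auto).
  assert (E1 : forall p, qv (mate m) p = v p + c s * qv m p).
  { intros p. rewrite Hc, fsum_S. unfold s at 2. rewrite Ln_app_r. f_equal. apply fsum_ext. intros j Hj.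
    rewrite Ln_app_l; auto. }
  assert (E2 : forall p, sgn (mate m) * qv m p = Kv v p + c s * (sgn m * qv (mate m) p)).
  { intros p. assert (H : Kv (qv (mate m)) p = sgn (mate m) * qv m p) by (rewrite Kq, mate_mate; auto).
    rewrite <- H. rewrite (Kv_ext _ _ E1). rewrite <- Kq.
    unfold Kv. destruct (Nat.odd p); ring. }
  rewrite sgn_mate in E2.
  assert (Hne : - sgn m * (1 + c s * c s) <> 0).
  { intro H. apply Rmult_integral in H. destruct H. unfold sgn in H; destruct (Nat.odd m); lra. nra. }
  eapply inspan_ext. 2:{ apply inspan_scal with (t := / (- sgn m * (1 + c s * c s))).
    apply inspan_add. apply inspan_K; eauto. apply inspan_scal with (t := c s * sgn m). exact Hv. }
  intros p. simpl. field_simplify_eq; auto.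
  specialize (E2 p). rewrite E1 in E2.
  transitivity (- sgn m * qv m p - c s * c s * (sgn m * qv m p)). 2: ring.
  rewrite E2. ring. split. pose proof (pow2_ge_0 (c s)). simpl in *. lra. unfold sgn; destruct (Nat.odd m); lra.
Qed.


Definition inb (L : list nat) (p : nat) : bool := existsb (Nat.eqb p) L.

Lemma inb_split (L : list nat) (u : nat -> R) p : NoDup L ->
  (if inb L p then u p else 0) = fsum (length L) (fun j => if Nat.eqb p (Ln L j) then u (Ln L j) else 0).
Proof. induction L as [|a L IH]; intros Hd. simpl; auto.
  inversion Hd; subst. change (length (a :: L)) with (S (length L)). rewrite fsum_shift1. unfold Ln at 1. simpl nth.
  rewrite (fsum_ext _ _ (fun j => if Nat.eqb p (Ln L j) then u (Ln L j) else 0)) by (intros; reflexivity).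
  rewrite <- IH by auto. unfold inb in *. simpl.
  destruct (Nat.eqb_spec p a).
  - subst. change (Ln (a :: L) 0) with a. destruct (existsb (Nat.eqb a) L) eqn:E; [|simpl; ring].
    exfalso. apply existsb_exists in E. destruct E as [x [Hx E]]. apply Nat.eqb_eq in E. subst; auto.
  - simpl. ring.
Qed.

Lemma ser_on (L : list nat) (u : nat -> R) : NoDup L ->
  infinite_sum (fun p => if inb L p then u p else 0) (fsum (length L) (fun j => u (Ln L j))).
Proof. intros Hd. apply (ser_ext (fun p => fsum (length L) (fun j => if Nat.eqb p (Ln L j) then u (Ln L j) else 0))).
  intros; rewrite inb_split; auto. apply ser_fsum. intros; apply ser_delta. Qed.

Lemma ser_off (L : list nat) (u : nat -> R) U : NoDup L -> infinite_sum u U ->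
  infinite_sum (fun p => if inb L p then 0 else u p) (U - fsum (length L) (fun j => u (Ln L j))).
Proof. intros Hd HU. apply (ser_ext (fun p => u p - (if inb L p then u p else 0))).
  intros p; destruct (inb L p); ring. apply ser_minus; auto. apply ser_on; auto. Qed.

Lemma Ln_inj L i j : NoDup L -> (i < length L)%nat -> (j < length L)%nat -> Ln L i = Ln L j -> i = j.
Proof. intros Hd Hi Hj E. apply (proj1 (NoDup_nth L 0%nat) Hd); auto. Qed.

Lemma Gm_pos L j i : NoDup L -> (i < length L)%nat -> (j < length L)%nat ->
  Gm L j i = (if Nat.eqb i j then 1 else 0) - M (Ln L j) (Ln L i).
Proof. intros Hd Hi Hj. unfold Gm, qv. f_equal. destruct (Nat.eqb_spec (Ln L j) (Ln L i)) as [E|E].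
  - apply Ln_inj in E; auto. subst. rewrite Nat.eqb_refl; auto.
  - destruct (Nat.eqb_spec i j); auto. subst; tauto. Qed.

Lemma Gm_sym L i j : Gm L i j = Gm L j i.
Proof. unfold Gm. apply qv_sym. Qed.

Lemma fsum_one s : fsum s (fun _ => 1) = INR s.
Proof. induction s; simpl fsum. simpl; auto. rewrite IHs, S_INR. auto. Qed.

Lemma comb_inverse L (H : nat -> nat -> R) (z : nat -> R) l :
  (forall i j, (i < length L)%nat -> (j < length L)%nat -> fsum (length L) (fun k => H i k * Gm L k j) = (if Nat.eqb i j then 1 else 0)) ->
  (l < length L)%nat ->
  fsum (length L) (fun i => H l i * fsum (length L) (fun j => Gm L i j * z j)) = z l.
Proof. intros HH Hl.
  rewrite (fsum_ext _ _ (fun i => fsum (length L) (fun j => H l i * Gm L i j * z j))).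
  2:{ intros; rewrite fsum_mult_l; apply fsum_ext; intros; ring. }
  rewrite fsum_swap. rewrite <- (fsum_delta (length L) z l Hl). apply fsum_ext. intros j Hj.
  rewrite <- HH by auto. rewrite fsum_mult_l. apply fsum_ext; intros; ring. Qed.

Lemma trace (L : list nat) : injG L -> (forall m, inspan L (qv m)) ->
  infinite_sum (fun m => 1 - M m m) (INR (length L)).
Proof. intros Hinj Hsp. destruct (left_inv (length L) (Gm L) Hinj) as [H HH].
  set (s := length L) in *.
  apply (ser_ext (fun m => fsum s (fun j => fsum s (fun i => H j i * (qv (Ln L i) m * qv (Ln L j) m))))).
  - intros m. destruct (Hsp m) as [c Hc]. fold s in Hc.
    assert (Hcl : forall l, (l < s)%nat -> fsum s (fun i => H l i * qv (Ln L i) m) = c l).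
    { intros l Hl. rewrite <- (comb_inverse L H c l HH Hl). apply fsum_ext. intros i Hi. f_equal.
      rewrite qv_sym, Hc. apply fsum_ext. intros j Hj. unfold Gm. rewrite (qv_sym (Ln L i)). ring. }
    replace (1 - M m m) with (qv m m) by (unfold qv; rewrite Nat.eqb_refl; auto).
    rewrite Hc. apply fsum_ext. intros j Hj. rewrite <- Hcl by auto. rewrite fsum_mult_r.
    apply fsum_ext; intros; ring.
  - rewrite <- fsum_one. apply ser_fsum. intros j Hj.
    replace 1 with (fsum s (fun i => H j i * Gm L i j)) by (rewrite HH, Nat.eqb_refl; auto).
    apply ser_fsum. intros i Hi. apply ser_scal. apply gram.
Qed.

Lemma off_ge0 L (u : nat -> R) : (forall p, 0 <= u p) -> forall p, 0 <= (if inb L p then 0 else u p).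
Proof. intros H p. destruct (inb L p). lra. auto. Qed.

Lemma off_sq_le L (u w : nat -> R) : (forall p, u p ^ 2 <= w p) ->
  forall p, 0 <= (if inb L p then 0 else u p) ^ 2 <= w p.
Proof. intros H p. split. apply pow2_ge_0. destruct (inb L p). pose proof (H p). pose proof (pow2_ge_0 (u p)).
  simpl; lra. auto. Qed.

Lemma lower_bound (L : list nat) : NoDup L -> injG L ->
  exists A, 0 < A /\ forall (v : nat -> R) S O,
    (forall r, infinite_sum (fun p => v p * M p r) (v r)) ->
    infinite_sum (fun p => v p ^ 2) S ->
    infinite_sum (fun p => if inb L p then 0 else v p ^ 2) O -> A * S <= O.
Proof. intros Hd Hinj. destruct (left_inv (length L) (Gm L) Hinj) as [H HH].
  set (s := length L) in *.
  set (C := fsum s (fun l => fsum s (fun i => Rabs (H l i)) ^ 2)).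
  assert (HC : 0 <= C) by (apply fsum_ge0; intros; apply pow2_ge_0).
  exists (/ (C + 1)). split. apply Rinv_0_lt_compat; lra.
  intros v S O HV HS HO.
  assert (O0 : 0 <= O) by (apply (ser_ge0 _ _ (off_ge0 L _ (fun p => pow2_ge_0 (v p))) HO)).
  set (z := fun j => v (Ln L j)).
  assert (HB : forall i, (i < s)%nat ->
    fsum s (fun j => Gm L i j * z j) ^ 2 <= O).
  { intros i Hi.
    pose proof (ser_off L (fun p => v p * M p (Ln L i)) _ Hd (HV (Ln L i))) as Hb.
    set (B := v (Ln L i) - fsum (length L) (fun j => v (Ln L j) * M (Ln L j) (Ln L i))) in Hb.
    assert (EB : B = fsum s (fun j => Gm L i j * z j)).
    { unfold B, z. fold s. symmetry.
      rewrite (fsum_ext _ (fun j => Gm L i j * v (Ln L j)) (fun j => (if Nat.eqb j i then 1 else 0) * v (Ln L j) + - (v (Ln L j) * M (Ln L j) (Ln L i)))).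
      rewrite fsum_plus, <- fsum_opp, fsum_delta' by auto. ring.
      intros j Hj. rewrite Gm_pos by auto. rewrite (Msym (Ln L i)). ring. }
    rewrite <- EB.
    destruct (ser_ex_le (fun p => (if inb L p then 0 else M p (Ln L i)) ^ 2) (fun p => M (Ln L i) p * M (Ln L i) p) _
       (off_sq_le L (fun p => M p (Ln L i)) (fun p => M (Ln L i) p * M (Ln L i) p) (fun p => ltac:(cbv beta; rewrite (Msym p); simpl; lra))) (M3 (Ln L i) (Ln L i))) as [Y [HY HYle]].
    assert (Y0 : 0 <= Y) by (apply (ser_ge0 _ _ (fun p => pow2_ge_0 _) HY)).
    pose proof (Mdiag (Ln L i)).
    assert (CS := ser_CS (fun p => if inb L p then 0 else v p) (fun p => if inb L p then 0 else M p (Ln L i)) O Y B).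
    assert (B ^ 2 <= O * Y).
    { apply CS; auto.
      - apply (ser_ext (fun p => if inb L p then 0 else v p ^ 2)); auto. intros p; destruct (inb L p); ring.
      - apply (ser_ext (fun p => if inb L p then 0 else v p * M p (Ln L i))); auto. intros p; destruct (inb L p); ring. }
    assert (O * Y <= O * 1) by (apply Rmult_le_compat_l; lra). lra. }
  assert (HZ : forall l, (l < s)%nat -> z l ^ 2 <= fsum s (fun i => Rabs (H l i)) ^ 2 * O).
  { intros l Hl. rewrite <- (comb_inverse L H z l HH Hl). fold s.
    set (T := fsum s (fun i => H l i * fsum s (fun j => Gm L i j * z j))).
    assert (HT : Rabs T <= fsum s (fun i => Rabs (H l i)) * sqrt O).
    { eapply Rle_trans. apply fsum_abs. rewrite fsum_mult_r. apply fsum_le. intros i Hi.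
      rewrite Rabs_mult. apply Rmult_le_compat_l. apply Rabs_pos.
      rewrite <- sqrt_Rsqr_abs. apply sqrt_le_1_alt. rewrite Rsqr_pow2. apply HB; auto. }
    assert (0 <= fsum s (fun i => Rabs (H l i))) by (apply fsum_ge0; intros; apply Rabs_pos).
    rewrite <- (pow2_abs T). replace (fsum s (fun i => Rabs (H l i)) ^ 2 * O) with ((fsum s (fun i => Rabs (H l i)) * sqrt O) ^ 2).
    apply pow_incr. split; auto. apply Rabs_pos.
    rewrite Rpow_mult_distr. rewrite pow2_sqrt; auto. }
  assert (HSz : fsum s (fun l => z l ^ 2) <= C * O).
  { unfold C. rewrite fsum_mult_r. apply fsum_le. auto. }
  pose proof (ser_off L (fun p => v p ^ 2) S Hd HS) as HO'.
  pose proof (ser_unique _ _ _ HO HO') as EO. fold s in EO.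
  assert (S <= (C + 1) * O).
  { replace S with (O + fsum s (fun j => v (Ln L j) ^ 2)) by lra. unfold z in HSz. lra. }
  apply (Rmult_le_reg_l (C + 1)). lra. rewrite <- Rmult_assoc, Rinv_r by lra. lra.
Qed.

Lemma inj_from_bound (L : list nat) (A : R) : NoDup L -> 0 < A ->
  (forall a : nat -> R, exists (v : nat -> R) S O,
     (forall p, v p = fsum (length L) (fun j => a j * M (Ln L j) p)) /\
     infinite_sum (fun p => v p ^ 2) S /\ S = fsum (length L) (fun j => a j * v (Ln L j)) /\
     infinite_sum (fun p => if inb L p then 0 else v p ^ 2) O /\ A * S <= O) ->
  injG L.
Proof. intros Hd HA Hreal a Ha. destruct (Hreal a) as [v [S [O [Hv [HS [ES [HO HAS]]]]]]].
  set (s := length L) in *.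
  assert (Hvi : forall i, (i < s)%nat -> v (Ln L i) = a i).
  { intros i Hi. specialize (Ha i Hi). rewrite Hv.
    rewrite (fsum_ext _ _ (fun j => a j * (if Nat.eqb i j then 1 else 0) + - (a j * M (Ln L j) (Ln L i)))) in Ha.
    rewrite fsum_plus, <- fsum_opp, fsum_delta in Ha by auto. lra.
    intros j Hj. rewrite Gm_pos by auto. rewrite Nat.eqb_sym. ring. }
  assert (ES' : S = fsum s (fun j => a j ^ 2)).
  { rewrite ES. apply fsum_ext. intros j Hj. rewrite Hvi; auto. ring. }
  pose proof (ser_off L _ _ Hd HS) as HO'. pose proof (ser_unique _ _ _ HO HO') as EO.
  rewrite (fsum_ext _ _ (fun j => a j ^ 2)) in EO by (intros; rewrite Hvi; auto).
  fold s in EO. assert (O = 0) by lra. subst O.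
  assert (S0 : S = 0).
  { assert (0 <= S) by (rewrite ES'; apply fsum_ge0; intros; apply pow2_ge_0).
    nra. }
  intros j Hj. assert (Haj : a j ^ 2 = 0).
  { apply (fsum_zero_terms s (fun j => a j ^ 2)); auto. intros; apply pow2_ge_0. lra. }
  destruct (Req_dec (a j) 0) as [|Hn]; auto. exfalso. apply (pow_nonzero _ 2 Hn). auto.
Qed.
End Core.

Definition dbl (l : list nat) : list nat := flat_map (fun n => [2 * n; S (2 * n)]%nat) l.

Lemma div2_cases x : x = (2 * Nat.div2 x)%nat \/ x = S (2 * Nat.div2 x).
Proof. pose proof (Nat.div2_odd x). destruct (Nat.odd x); simpl in H; lia. Qed.

Lemma In_dbl l x : In x (dbl l) <-> In (Nat.div2 x) l.
Proof. unfold dbl. rewrite in_flat_map. split.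
  - intros [n [Hn Hx]]. cbn [In] in Hx. destruct Hx as [<-|[<-|[]]].
    rewrite Nat.div2_double; auto. rewrite Nat.div2_succ_double; auto.
  - intros H. exists (Nat.div2 x). split; auto. cbn [In]. destruct (div2_cases x); auto. Qed.

Lemma NoDup_dbl l : NoDup l -> NoDup (dbl l).
Proof. induction l as [|a l IH]; intros Hd. constructor.
  inversion Hd; subst. change (dbl (a :: l)) with ((2 * a)%nat :: S (2 * a) :: dbl l). constructor.
  - intros [E|E]. lia. apply In_dbl in E. rewrite Nat.div2_double in E. auto.
  - constructor. intros E. apply In_dbl in E. rewrite Nat.div2_succ_double in E. auto.
    apply IH; auto. Qed.

Lemma length_dbl l : length (dbl l) = (2 * length l)%nat.
Proof. induction l; auto. change (length (dbl (a :: l))) with (S (S (length (dbl l)))). rewrite IHl. simpl. lia. Qed.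

Lemma inb_In L x : inb L x = true <-> In x L.
Proof. unfold inb. rewrite existsb_exists. split.
  - intros [y [Hy E]]. apply Nat.eqb_eq in E. subst; auto.
  - intros H. exists x. split; auto. apply Nat.eqb_refl. Qed.

Lemma inb_false L x : inb L x = false <-> ~ In x L.
Proof. rewrite <- inb_In. destruct (inb L x); split; auto; congruence. Qed.

Lemma div2_mate m : Nat.div2 (mate m) = Nat.div2 m.
Proof. unfold mate. pose proof (Nat.div2_odd m) as E. destruct (Nat.odd m); simpl Nat.b2n in E.
  - replace (pred m) with (2 * Nat.div2 m)%nat by lia. apply Nat.div2_double.
  - replace (S m) with (S (2 * Nat.div2 m)) by lia. apply Nat.div2_succ_double. Qed.

Lemma mate_neq m : mate m <> m.
Proof. unfold mate. pose proof (Nat.div2_odd m) as E. destruct (Nat.odd m); simpl Nat.b2n in E; lia. Qed.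

Lemma pairclosed_dbl l : pairclosed (dbl l).
Proof. intros j Hj. assert (Hin : In (Ln (dbl l) j) (dbl l)) by (apply nth_In; auto).
  assert (Hm : In (mate (Ln (dbl l) j)) (dbl l)) by (apply In_dbl; rewrite div2_mate; apply In_dbl; auto).
  destruct (In_nth _ _ 0%nat Hm) as [j' [Hj' E]]. exists j'. auto. Qed.

Definition baseL (k : nat) (S : list nat) : list nat := seq 0 k ++ map (fun n => (n + k)%nat) S.

Lemma In_baseL k S n : In n (baseL k S) <-> (n < k)%nat \/ ((k <= n)%nat /\ In (n - k)%nat S).
Proof. unfold baseL. rewrite in_app_iff, in_seq, in_map_iff. split.
  - intros [H|[x [<- Hx]]]. left; lia. right. replace (x + k - k)%nat with x by lia. split; auto; lia.
  - intros [H|[H1 H2]]. left; lia. right. exists (n - k)%nat. split; auto; lia. Qed.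

Lemma NoDup_baseL k S : NoDup S -> NoDup (baseL k S).
Proof. intros Hd. unfold baseL. apply NoDup_app. apply seq_NoDup.
  apply NoDup_map_NoDup_ForallPairs; auto. intros x y _ _ E; lia.
  intros a Ha Hb. apply in_seq in Ha. apply in_map_iff in Hb. destruct Hb as [x [<- _]]. lia. Qed.

Lemma prepend_hi k xs f n : prepend k xs f (n + k) = f n.
Proof. unfold prepend. destruct (Nat.ltb_spec (n + k) k). lia. f_equal. lia. Qed.
Lemma prepend_lo k xs f n : (n < k)%nat -> prepend k xs f n = xs n.
Proof. intros H. unfold prepend. destruct (Nat.ltb_spec n k). auto. lia. Qed.

Lemma inlist_In l n : inlist l n = true <-> In n l.
Proof. apply inb_In. Qed.

Section Main.
Variable g : nat -> vec.
Hypothesis Hgl2 : forall n, l2 (g n).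
Hypothesis Hgpar : forall y, l2 y -> infinite_sum (fun n => cabs2 (ip y (g n))) (nrm2 y).

Definition hh := hfam g.
Definition MM (p r : nat) : R := ipr (hh p) (hh r).

Lemma hh_l2 m : l2 (hh m).
Proof. apply hfam_l2; auto. Qed.

Lemma HPr y : l2 y -> infinite_sum (fun m => ipr y (hh m) ^ 2) (nrm2 y).
Proof. apply parseval_real; auto. Qed.

Lemma Hpol y z : l2 y -> l2 z -> infinite_sum (fun m => ipr y (hh m) * ipr z (hh m)) (ipr y z).
Proof. apply polarize. apply hh_l2. apply HPr. Qed.

Lemma MMsym a b : MM a b = MM b a.
Proof. apply ipr_sym. Qed.

Lemma MM3 a b : infinite_sum (fun p => MM a p * MM b p) (MM a b).
Proof. apply Hpol; apply hh_l2. Qed.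

Lemma MMJ1 n r : MM (S (2 * n)) (2 * r) = - MM (2 * n) (S (2 * r)).
Proof. unfold MM, hh. rewrite !hfam_even, !hfam_odd. apply ipr_Jl; auto. Qed.

Lemma MMJ2 n r : MM (S (2 * n)) (S (2 * r)) = MM (2 * n) (2 * r).
Proof. unfold MM, hh. rewrite !hfam_even, !hfam_odd. apply ipr_JJ. Qed.

Lemma MMV y : l2 y -> forall r, infinite_sum (fun p => ipr y (hh p) * MM p r) (ipr y (hh r)).
Proof. intros Hy r. apply (ser_ext (fun p => ipr y (hh p) * ipr (hh r) (hh p))).
  intros p. unfold MM. rewrite (ipr_sym (hh r)). auto. apply Hpol; auto. apply hh_l2. Qed.

Lemma pair_id y n : cabs2 (ip y (g n)) = ipr y (hh (2 * n)) ^ 2 + ipr y (hh (S (2 * n))) ^ 2.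
Proof. unfold hh. rewrite hfam_even, hfam_odd. apply cabs2_ip. Qed.

Lemma realize (L : list nat) (A : R) : NoDup L -> 0 < A ->
  (forall y, l2 y -> exists O, infinite_sum (fun m => if inb L m then 0 else ipr y (hh m) ^ 2) O /\ A * nrm2 y <= O) ->
  injG MM L.
Proof. intros Hd HA Hb. apply (inj_from_bound MM L A Hd HA). intros a.
  set (s := length L).
  set (y := vsum s (fun j => vscal (a j) (hh (Ln L j)))).
  assert (Hy : l2 y) by (apply l2_vsum; intros; apply l2_scal, hh_l2).
  assert (Hv : forall z, l2 z -> ipr y z = fsum s (fun j => a j * ipr (hh (Ln L j)) z)).
  { intros z Hz. unfold y. rewrite ipr_vsum_l; auto. apply fsum_ext. intros j Hj. apply ipr_scal_l; auto. apply hh_l2.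
    intros; apply l2_scal, hh_l2. }
  destruct (Hb y Hy) as [O [HO HAO]].
  exists (fun p => ipr y (hh p)), (nrm2 y), O. split; [|split; [|split; [|split]]]; auto.
  - intros p. apply Hv, hh_l2.
  - apply HPr; auto.
  - rewrite nrm2_ipr, Hv by auto. apply fsum_ext. intros j Hj. rewrite ipr_sym. auto.
Qed.

End Main.

Lemma inb_app A B x : inb (A ++ B) x = (inb A x || inb B x)%bool.
Proof. unfold inb. apply existsb_app. Qed.

Lemma bool_iff (b c : bool) : (b = true <-> c = true) -> b = c.
Proof. destruct b, c; intuition congruence. Qed.

Lemma inb_dbl l x : inb (dbl l) x = inb l (Nat.div2 x).
Proof. apply bool_iff. rewrite !inb_In. apply In_dbl. Qed.

Lemma inb_baseL k S n : inb (baseL k S) n = (Nat.ltb n k || inlist S (n - k))%bool.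
Proof. apply bool_iff. rewrite inb_In, In_baseL, Bool.orb_true_iff, Nat.ltb_lt, inlist_In.
  split; intros [H|H]; auto. destruct H; auto. destruct (Nat.lt_ge_cases n k); auto. Qed.

Lemma inb_pair m x : inb [m; mate m] x = Nat.eqb (Nat.div2 x) (Nat.div2 m).
Proof. apply bool_iff. rewrite inb_In, Nat.eqb_eq. simpl. split.
  - intros [<-|[<-|[]]]; auto. rewrite div2_mate; auto.
  - intros E. unfold mate. pose proof (Nat.div2_odd m) as Em. pose proof (Nat.div2_odd x) as Ex.
    destruct (Nat.odd m); destruct (Nat.odd x); simpl Nat.b2n in *; lia. Qed.

Lemma off_le L (u : nat -> R) : (forall p, 0 <= u p) -> forall p, 0 <= (if inb L p then 0 else u p) <= u p.
Proof. intros H p. destruct (inb L p); split; auto; lra. Qed.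

Theorem main_thm (f : nat -> vec) (e : nat) (k : nat) (xs : nat -> vec) :
  excess f e ->
  parseval (prepend k xs f) ->
  infinite_sum (fun n => 1 - nrm2 (f n)) (fsum k (fun n => nrm2 (xs n)) + INR e).
Proof.
  intros Hexc Hpar.
  destruct Hpar as [Hgl2 Hgpar]. set (g := prepend k xs f) in *.
  destruct Hexc as [[SL [HSnd [HSlen HSfr]]] Hmax].
  set (E := dbl (baseL k SL)).
  assert (HEnd : NoDup E) by (apply NoDup_dbl, NoDup_baseL; auto).
  assert (HinbE : forall x, inb E x = (Nat.ltb (Nat.div2 x) k || inlist SL (Nat.div2 x - k))%bool).
  { intros x. unfold E. rewrite inb_dbl, inb_baseL. auto. }
  assert (Hinj : injG (MM g) E).
  { destruct HSfr as [Hfl2 [A [B [HA HAB]]]]. apply (realize g Hgl2 Hgpar E A HEnd HA).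
    intros y Hy. destruct (HAB y Hy) as [s0 [Hs0 [Hlo _]]]. exists s0. split; auto.
    apply ser_of_pair. apply off_ge0. intros; apply pow2_ge_0.
    apply (ser_ext (fun n => if Nat.ltb n k then 0 else coef2 (fun n => negb (inlist SL n)) f y (n - k))).
    2: apply ser_shift_in; auto.
    intros n. rewrite !HinbE. rewrite Nat.div2_double, Nat.div2_succ_double.
    destruct (Nat.ltb_spec n k). simpl. ring.
    unfold coef2. simpl orb.
    replace (f (n - k)%nat) with (g n).
    2:{ unfold g. replace n with (n - k + k)%nat at 1 by lia. apply prepend_hi. }
    rewrite pair_id. destruct (inlist SL (n - k)); simpl; ring. }
  assert (Hspan : forall m, inspan (MM g) E (qv (MM g) m)).
  { intros m. destruct (In_dec Nat.eq_dec m E) as [Hin|Hnin].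
    - destruct (In_nth E m 0%nat Hin) as [j [Hj Ej]]. rewrite <- Ej. apply inspan_q; auto.
    - apply NNPP. intros Hns.
      pose proof (extend_pair (MM g) (MMsym g) (MM3 g Hgl2 Hgpar) (MMJ1 g Hgl2) (MMJ2 g) E m Hinj (pairclosed_dbl _) Hns) as Hinj2.
      set (F := E ++ [m; mate m]) in *.
      assert (HFnd : NoDup F).
      { apply NoDup_app; auto. constructor. intros [H|[]]. apply (mate_neq m); auto. constructor; auto. constructor.
        intros a Ha [<-|[<-|[]]]. auto. apply Hnin. unfold E in *. apply In_dbl. apply In_dbl in Ha.
        rewrite div2_mate in Ha. auto. }
      destruct (lower_bound (MM g) (MMsym g) (MM3 g Hgl2 Hgpar) F HFnd Hinj2) as [A' [HA' Hlb]].
      set (N := Nat.div2 m).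
      assert (HmE : inb E m = false) by (apply inb_false; auto).
      rewrite HinbE in HmE. fold N in HmE. apply Bool.orb_false_iff in HmE. destruct HmE as [HNk HNS].
      apply Nat.ltb_ge in HNk.
      assert (HinbF : forall x, inb F x = (Nat.ltb (Nat.div2 x) k || inlist SL (Nat.div2 x - k) || Nat.eqb (Nat.div2 x) N)%bool).
      { intros x. unfold F. rewrite inb_app, HinbE, inb_pair. auto. }
      assert (Hfr2 : frame_sub (fun n => negb (inlist SL n || Nat.eqb n (N - k))) f).
      { split. intros n; rewrite <- (prepend_hi k xs f n); apply Hgl2.
        exists A', 1. split; auto. intros y Hy.
        destruct (ser_ex_le (fun p => if inb F p then 0 else ipr y (hh g p) ^ 2) (fun p => ipr y (hh g p) ^ 2) (nrm2 y)
          (off_le F _ (fun p => pow2_ge_0 _))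
          (HPr g Hgl2 Hgpar y Hy)) as [O [HO HOle]].
        exists O. split; [|split].
        - pose proof (ser_pair_of _ _ HO) as HO2.
          apply ser_shift_out with (k := k) in HO2.
          + eapply ser_ext. 2: exact HO2. intros n. cbv beta. rewrite !HinbF.
            rewrite Nat.div2_double, Nat.div2_succ_double.
            replace (Nat.ltb (n + k) k) with false by (symmetry; apply Nat.ltb_ge; lia).
            replace (n + k - k)%nat with n by lia.
            replace (Nat.eqb (n + k) N) with (Nat.eqb n (N - k)).
            2:{ destruct (Nat.eqb_spec n (N - k)); destruct (Nat.eqb_spec (n + k) N); auto; lia. }
            unfold coef2. rewrite <- (prepend_hi k xs f n). fold g. rewrite pair_id.
            cbn [orb negb]. destruct (inlist SL n || Nat.eqb n (N - k))%bool; cbn [negb]; ring.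
          + intros n Hn. cbv beta. rewrite !HinbF. rewrite Nat.div2_double, Nat.div2_succ_double.
            replace (Nat.ltb n k) with true by (symmetry; apply Nat.ltb_lt; auto). simpl. ring.
        - apply (Hlb (fun p => ipr y (hh g p))); auto. apply MMV; auto. apply HPr; auto.
        - lra. }
      destruct (Hmax _ Hfr2) as [l [Hlnd [Hlen Hlin]]].
      assert (Hincl : incl ((N - k)%nat :: SL) l).
      { intros x [<-|Hx]; apply Hlin. rewrite Nat.eqb_refl. apply Bool.orb_true_r.
        apply inlist_In in Hx. rewrite Hx. auto. }
      assert (Hnd2 : NoDup ((N - k)%nat :: SL)).
      { constructor; auto. intros H. apply inlist_In in H. congruence. }
      pose proof (NoDup_incl_length Hnd2 Hincl). simpl in H. lia. }
  pose proof (trace (MM g) (MMsym g) (MM3 g Hgl2 Hgpar) E Hinj Hspan) as Htr.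
  assert (HlenE : length E = (2 * (k + e))%nat).
  { unfold E. rewrite length_dbl. unfold baseL. rewrite length_app, length_seq, length_map. lia. }
  rewrite HlenE in Htr.
  apply ser_pair_of in Htr.
  assert (Hg : infinite_sum (fun n => 1 - nrm2 (g n)) (INR k + INR e)).
  { apply (ser_ext (fun n => / 2 * ((1 - MM g (2 * n) (2 * n)) + (1 - MM g (S (2 * n)) (S (2 * n)))))).
    - intros n. unfold MM, hh. rewrite hfam_even, hfam_odd, ipr_JJ, <- nrm2_ipr. field.
    - replace (INR k + INR e) with (/ 2 * INR (2 * (k + e))) by (rewrite mult_INR, plus_INR; simpl; field).
      apply ser_scal; auto. }
  apply ser_drop with (k := k) in Hg.
  replace (fsum k (fun n => nrm2 (xs n)) + INR e) with (INR k + INR e - fsum k (fun n => 1 - nrm2 (g n))).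
  - eapply ser_ext. 2: exact Hg. intros n. cbv beta. unfold g. rewrite prepend_hi. auto.
  - rewrite (fsum_ext k _ (fun n => 1 + - nrm2 (xs n))).
    rewrite fsum_plus, fsum_one, <- fsum_opp. ring.
    intros n Hn. unfold g. rewrite prepend_lo by auto. ring.
Qed.

Theorem corollary3p7 (f : nat -> vec) (e : nat) (k : nat) (xs : nat -> vec) :
  is_frame f ->
  optimal_upper_bound f 1 ->
  excess f e ->
  finite_rank_defect f ->
  parseval (prepend k xs f) ->
  infinite_sum (fun n => 1 - nrm2 (f n)) (fsum k (fun n => nrm2 (xs n)) + INR e).
Proof.
  intros _ _ Hexc _ Hpar. exact (main_thm f e k xs Hexc Hpar).
Qed.
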